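(* Let $(\bar z_m)_{m\in\mathbb N}$ be a sequence in $\ell_\infty$ which converges weak$^*$ (as the dual of $\ell_1$) to $\bar z\in\ell_\infty$, and let $|||\cdot|||$ be the norm on $\ell_\infty$ defined in the context. Then $\lim_m|||\bar z_m|||$ exists if and only if $\lim_m\|\bar z_m\|_\infty$ exists. Moreover, $\lim_m|||\bar z_m|||=|||\bar z|||$ if and only if $\lim_m\|\bar z_m\|_\infty=\|\bar z\|_\infty$.
   Context: Let $c_{00}(\mathbb Q)$ be the set of finitely supported sequences with rational coefficients, and let $(u_n)_{n\in\mathbb N}$ be a sequence in $c_{00}(\mathbb Q)$ which lists every element of $c_{00}(\mathbb Q)$ infinitely many times. Let $(a_n)_{n\in\mathbb N}$ be a strictly increasing sequence of positive integers with $a_n>\max\operatorname{supp} u_n$ and $a_n>\|u_n\|_1$ for every $n$. $(e_n)$ denotes the canonical unit vectors and $\langle x,y\rangle=\sum_n x_ny_n$ for $x\in\ell_\infty$, $y\in\ell_1$. For $\bar x\in\ell_\infty$ define $|||\bar x||| = \|\bar x\|_\infty + \sum_{n} 2^{-a_n^2}|\langle \bar x, u_n - e_{a_n}\rangle|$ (it is known that $\sum_n 2^{-a_n^2}\|u_n-e_{a_n}\|_1\le 2$). *)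

(* Defs.v *)
From HB Require Import structures.
From mathcomp Require Import all_boot all_order all_algebra.
From mathcomp Require Import all_classical all_reals all_analysis.
Set Implicit Arguments. Unset Strict Implicit. Unset Printing Implicit Defensive.
Import Order.TTheory GRing.Theory Num.Theory.
Import numFieldNormedType.Exports.
Local Open Scope classical_set_scope.
Local Open Scope ring_scope.

Definition linf_mem {R : realType} (x : nat -> R) : Prop :=
  exists M : R, forall n, `|x n| <= M.

Definition l1_mem {R : realType} (y : nat -> R) : Prop :=
  cvgn (series (fun k => `|y k|)).

Definition linf_norm {R : realType} (x : nat -> R) : R :=
  sup [set `|x n| | n in setT].

Definition rsum {R : realType} (f : nat -> R) : R := limn (series f).

Definition pairing {R : realType} (x y : nat -> R) : R :=
  rsum (fun k => x k * y k).

Definition unit_vec {R : realType} (j : nat) : nat -> R :=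
  fun k => (k == j)%:R.

Definition rat_seq {R : realType} (v : nat -> rat) : nat -> R :=
  fun k => ratr (v k).

Definition finitely_supported (v : nat -> rat) : Prop :=
  exists N, forall k, (N <= k)%N -> v k = 0.

Definition lists_c00_inf_often (u : nat -> nat -> rat) : Prop :=
  (forall n, finitely_supported (u n)) /\
  forall v, finitely_supported v -> forall M, exists n, (M <= n)%N /\ u n = v.

Definition admissible_a (u : nat -> nat -> rat) (a : nat -> nat) : Prop :=
  (forall n, (a n < a n.+1)%N) /\
  (forall n, (0 < a n)%N) /\
  (forall n k, u n k != 0 -> (k < a n)%N) /\
  (forall n, \sum_(k < a n) `|u n k| < (a n)%:R).

Definition triple_norm {R : realType} (u : nat -> nat -> rat) (a : nat -> nat)
    (x : nat -> R) : R :=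
  linf_norm x +
  rsum (fun n => (2 : R) ^- (a n ^ 2)%N *
      `|pairing x (fun k => rat_seq (u n) k - unit_vec (a n) k)|).

(* weak* convergence in ell_infty = (ell_1)^* *)
Definition weak_star_cvg {R : realType} (z : nat -> nat -> R) (zl : nat -> R) : Prop :=
  forall y : nat -> R, l1_mem y -> (fun m => pairing (z m) y) @ \oo --> pairing zl y.

(* Main.v *)
Require Import Defs.
From HB Require Import structures.
From mathcomp Require Import all_boot all_order all_algebra.
From mathcomp Require Import all_classical all_reals all_analysis.
From mathcomp Require Import ring lra zify.
Import Order.TTheory GRing.Theory Num.Theory.
Import numFieldNormedType.Exports.
Local Open Scope classical_set_scope.
Local Open Scope ring_scope.



Section Basic.
Variable R : realType.

Lemma series_fin (f : nat -> R) N n : (forall k, (N <= k)%N -> f k = 0) ->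
  (N <= n)%N -> series f n = \sum_(k < N) f k.
Proof.
move=> f0 Nn; rewrite /series /= (big_cat_nat (n:=N)) //=.
rewrite [X in _ + X]big_nat_cond [X in _ + X]big1 ?addr0 ?big_mkord //.
by move=> k /andP[/andP[Nk _] _]; exact: f0.
Qed.

Lemma rsum_fin (f : nat -> R) N : (forall k, (N <= k)%N -> f k = 0) ->
  rsum f = \sum_(k < N) f k.
Proof.
move=> f0; rewrite /rsum; apply: cvg_lim => //; apply: cvg_near_cst.
near=> n; apply: series_fin => //; near: n; exact: nbhs_infty_ge.
Unshelve. all: by end_near. Qed.

Lemma cvg_series_fin (f : nat -> R) N : (forall k, (N <= k)%N -> f k = 0) ->
  cvgn (series f).
Proof.
move=> f0; apply/cvg_ex; exists (\sum_(k < N) f k); apply: cvg_near_cst.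
near=> n; apply: series_fin => //; near: n; exact: nbhs_infty_ge.
Unshelve. all: by end_near. Qed.

Lemma cvg_bnd (u : nat -> R) : cvgn u -> exists M, forall n, `|u n| <= M.
Proof.
move=> /cvg_seq_bounded [M [Mr HM]]; exists (M + 1) => n.
by apply: (HM (M + 1)) => //; rewrite ltrDl.
Qed.

Lemma pairing_unit (x : nat -> R) k : pairing x (unit_vec k) = x k.
Proof.
rewrite /pairing (@rsum_fin _ k.+1); last first.
  by move=> i ki; rewrite /unit_vec gtn_eqF // mulr0.
rewrite big_ord_recr /= /unit_vec eqxx mulr1 big1 ?add0r // => i _.
by rewrite (ltn_eqF (ltn_ord i)) mulr0.
Qed.

Lemma l1_unit k : l1_mem (@unit_vec R k).
Proof.
apply: (@cvg_series_fin _ k.+1) => i ki; rewrite /unit_vec.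
by rewrite gtn_eqF // normr0.
Qed.

Lemma cvg_finsum (f : nat -> nat -> R) (g : nat -> R) N :
  (forall k, f ^~ k @ \oo --> g k) ->
  (fun m => \sum_(k < N) f m k) @ \oo --> \sum_(k < N) g k.
Proof.
move=> fg; elim: N => [|N IH].
  under eq_fun do rewrite big_ord0; rewrite big_ord0; exact: cvg_cst.
under eq_fun do rewrite big_ord_recr; rewrite big_ord_recr /=.
exact: cvgD.
Qed.

Lemma abs_cvg_series (f : nat -> R) : cvgn (series (fun k => `|f k|)) ->
  cvgn (series f).
Proof. move=> h; apply: normed_cvg; exact: h. Qed.

Lemma geom_half_le N : \sum_(i < N) (2^-1 : R) ^+ i <= 2 - 2 * 2^-1 ^+ N.
Proof.
elim: N => [|N IH]; first by rewrite big_ord0 expr0 mulr1 subrr.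
rewrite big_ord_recr /= exprS.
have -> : 2 - 2 * (2^-1 * (2^-1:R) ^+ N) = 2 - 2 * 2^-1 ^+ N + 2^-1 ^+ N.
  by field.
by rewrite lerD2r.
Qed.

Lemma geom_half_le2 N : \sum_(i < N) (2^-1 : R) ^+ i <= 2.
Proof.
apply: (le_trans (geom_half_le N)); rewrite lerBlDr lerDl.
by rewrite mulr_ge0 // exprn_ge0.
Qed.

Lemma sum_indic (a N : nat) : \sum_(k < N) ((a == k)%:R : R) <= 1.
Proof.
elim: N => [|N IH]; first by rewrite big_ord0.
rewrite big_ord_recr /=; case: eqP => [->|_]; last by rewrite addr0.
rewrite big1 ?add0r // => i _; by rewrite gtn_eqF.
Qed.

Lemma dsum (w : nat -> R) (kk : nat -> nat) N : (forall i, 0 <= w i) ->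
  \sum_(k < N) \sum_(i < N) ((kk i == k)%:R * w i) <= \sum_(i < N) w i.
Proof.
move=> w0; rewrite exchange_big /=; apply: ler_sum => i _.
rewrite -big_distrl /= -[leRHS]mul1r; apply: ler_wpM2r => //.
exact: sum_indic.
Qed.

End Basic.



Section UB.
Variable R : realType.

Lemma sum_widen_le (F : nat -> R) n1 n2 : (forall i, 0 <= F i) -> (n1 <= n2)%N ->
  \sum_(i < n1) F i <= \sum_(i < n2) F i.
Proof.
move=> F0 n12; rewrite -!(big_mkord xpredT) [leRHS](big_cat_nat _ (n:=n1)) //=.
by rewrite lerDl sumr_ge0.
Qed.

Lemma sum_cut (A : nat -> R) K N : (K <= N)%N ->
  \sum_(k < N) ((k < K)%N%:R * A k) = \sum_(k < K) A k.
Proof.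
move=> KN; rewrite (big_ord_widen _ _ KN) [RHS]big_mkcond /=; apply: eq_bigr => k _.
by case: ifP => _; rewrite ?mul1r ?mul0r.
Qed.

Lemma cvgn_scale (s : nat -> R) c : cvgn s -> cvgn (fun n => c * s n).
Proof. move=> h; exact: (is_cvgM (is_cvg_cst c) h). Qed.

Lemma series_scale (g : nat -> R) c : series (fun k => c * g k) = (fun n => c * series g n).
Proof. by apply: funext => n; rewrite /series /= big_distrr. Qed.

Lemma abs_dom_cvg (f g : nat -> R) c : 0 <= c -> (forall k, `|f k| <= c * `|g k|) ->
  l1_mem g -> cvgn (series f).
Proof.
move=> c0 fg hg; apply: abs_cvg_series.
apply: (@series_le_cvg _ _ (fun k => c * `|g k|)) => //.
- by move=> n; rewrite mulr_ge0.
- by rewrite series_scale; apply: cvgn_scale.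
Qed.

End UB.



Section UB2.
Variable R : realType.
Variable z : nat -> nat -> R.
Hypothesis Hb : forall m, linf_mem (z m).
Hypothesis Hw : forall y, l1_mem y -> cvgn (fun m => pairing (z m) y).

Lemma coord_bnd k : exists C, forall m, `|z m k| <= C.
Proof.
have /cvg_bnd [C HC] := Hw _ (l1_unit R k).
by exists C => m; move: (HC m); rewrite pairing_unit.
Qed.

Lemma UB : exists C, forall m k, `|z m k| <= C.
Proof.
apply: contrapT => nub.
have [C HC] := choice coord_bnd.
have [N HN] := choice Hb.
have pk : forall KT : nat * R, exists mk : nat * nat,
    (KT.1 <= mk.2)%N /\ KT.2 < `|z mk.1 mk.2|.
  case=> K T /=; apply: contrapT => hn; apply: nub.
  exists (`|T| + \sum_(k < K) `|C k|) => m k.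
  have S0 : 0 <= \sum_(k < K) `|C k| by apply: sumr_ge0.
  case: (ltnP k K) => kK.
    apply: (le_trans (HC k m)); apply: (le_trans (ler_norm _)).
    by rewrite (bigD1 (Ordinal kK)) //= addrCA lerDl addr_ge0 // sumr_ge0.
  have : ~ (T < `|z m k|) by move=> h; apply: hn; exists (m, k).
  move/negP; rewrite -leNgt => h; apply: (le_trans h).
  by apply: (le_trans (ler_norm _)); rewrite lerDl.
have [P HP] := choice pk.
pose B K := \sum_(k < K) `|C k| * k.+1%:R.
pose tt j S := (2^-1 : R) ^+ j / (1 + S).
pose thr j K S := (B K + j%:R + 3) / tt j S.
pose st := fix st j := if j is j'.+1 then
   let p := P ((st j').1, thr j' (st j').1 (st j').2) in
   ((p.2).+1, (st j').2 + `|N p.1|) else (0%N, 0).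
pose mm j := (P ((st j).1, thr j (st j).1 (st j).2)).1.
pose kk j := (P ((st j).1, thr j (st j).1 (st j).2)).2.
pose t j := tt j (st j).2.
have F1 j : ((st j).1 <= kk j)%N /\ thr j (st j).1 (st j).2 < `|z (mm j) (kk j)|.
  exact: (HP ((st j).1, thr j (st j).1 (st j).2)).
have F2 j : st j.+1 = ((kk j).+1, (st j).2 + `|N (mm j)|) by [].
have F3 j : 0 <= (st j).2.
  elim: j => [|j IH]; first by rewrite /= lexx.
  rewrite F2 /=; exact: addr_ge0.
have F4 i j : (i < j)%N -> (kk i < (st j).1)%N /\ `|N (mm i)| <= (st j).2.
  elim: j => [//|j IH]; rewrite ltnS leq_eqVlt F2 /= => /orP[/eqP ->|ij].
    by rewrite ltnSn lerDr F3.
  have [h1 h2] := IH ij; split.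
    by apply: (leq_trans h1); apply: (leq_trans (proj1 (F1 j))).
  by apply: (le_trans h2); rewrite lerDl.
have F5 i j : (i < j)%N -> (kk i < kk j)%N.
  by move=> ij; apply: (leq_trans (proj1 (F4 i j ij))); exact: (proj1 (F1 j)).
have F6 j : (j <= kk j)%N.
  elim: j => [//|j IH]; exact: (leq_ltn_trans IH (F5 _ _ (ltnSn j))).
have kk_inj i j : kk i = kk j -> i = j.
  move=> e; case: (ltngtP i j) => // h; have := F5 _ _ h; by rewrite e ltnn.
have t0 j : 0 < t j.
  by rewrite /t /tt divr_gt0 // ?exprn_gt0 // ltr_pwDl // F3.
have t1 j : t j <= (2^-1) ^+ j.
  rewrite /t /tt ler_pdivrMr ?ltr_pwDl ?F3 // ler_peMr ?exprn_ge0 //.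
  by rewrite lerDl F3.
have F7 i j : (j < i)%N -> `|N (mm j)| * t i <= (2^-1) ^+ i.
  move=> ji; rewrite /t /tt mulrA ler_pdivrMr ?ltr_pwDl ?F3 //.
  rewrite mulrC ler_pM2l ?exprn_gt0 //; apply: (le_trans (proj2 (F4 _ _ ji))).
  by rewrite lerDr.
pose y k := \sum_(i < k.+1) (kk i == k)%:R * (t i * Num.sg (z (mm i) (kk i))).
have Y1 k : `|y k| <= \sum_(i < k.+1) (kk i == k)%:R * t i.
  apply: le_trans (ler_norm_sum _ _ _) _; apply: ler_sum => i _.
  have tn : `|t i| = t i := gtr0_norm (t0 i).
  rewrite normrM normr_nat normrM tn normr_sg.
  apply: ler_wpM2l => //.
  by apply: ler_piMr; [exact: ltW | rewrite lern1 leq_b1].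
have L1 : l1_mem y.
  rewrite /l1_mem; apply: nondecreasing_is_cvgn.
    by apply/nondecreasing_seqP => n; rewrite seriesSr lerDl.
  exists 2 => _ [n _ <-]; rewrite /series /= big_mkord.
  apply: (@le_trans _ _ (\sum_(k < n) \sum_(i < n) (kk i == k)%:R * t i)).
    apply: ler_sum => k _; apply: (le_trans (Y1 k)).
    apply: (@sum_widen_le _ (fun i => (kk i == k)%:R * t i)); last exact: ltn_ord.
    by move=> i; rewrite mulr_ge0 // ltW.
  apply: (le_trans (dsum R t kk n _)); first by move=> i; exact: ltW.
  apply: le_trans (geom_half_le2 R n); apply: ler_sum => i _; exact: t1.
have M1 j n : (kk j < n)%N ->
    (j.+1)%:R <= `|series (fun k => z (mm j) k * y k) n|.
  move=> hN; rewrite /series /= big_mkord (bigD1 (Ordinal hN)) //=.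
  have hj : (j < (kk j).+1)%N by rewrite ltnS F6.
  have yk : y (kk j) = t j * Num.sg (z (mm j) (kk j)).
    rewrite /y (bigD1 (Ordinal hj)) //= eqxx mul1r big1 ?addr0 // => i hij.
    case: eqP => [e|_]; last by rewrite mul0r.
    exfalso; move: hij => /eqP; apply; apply: val_inj => /=; exact: kk_inj e.
  have fk : z (mm j) (kk j) * y (kk j) = t j * `|z (mm j) (kk j)|.
    by rewrite yk normrEsg; ring.
  have bigt : B (st j).1 + j%:R + 3 < t j * `|z (mm j) (kk j)|.
    have := proj2 (F1 j); rewrite /thr (ltr_pdivrMr _ _ (t0 j)) mulrC //.
  pose g k := (k < (st j).1)%N%:R * (`|C k| * k.+1%:R) +
              \sum_(i < n) (kk i == k)%:R * (2^-1 : R) ^+ i.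
  have g0 k : 0 <= g k.
    by apply: addr_ge0; [apply: mulr_ge0 => //; apply: mulr_ge0 |
        apply: sumr_ge0 => i _; apply: mulr_ge0 => //; apply: exprn_ge0].
  have fg k : (k < n)%N -> k != kk j -> `|z (mm j) k * y k| <= g k.
    move=> kN hk; rewrite normrM.
    case: (ltnP k (st j).1) => kK.
      rewrite /g kK mul1r; apply: ler_wpDr; first by apply: sumr_ge0 => i _; 
        apply: mulr_ge0 => //; apply: exprn_ge0.
      apply: ler_pM => //; first exact: (le_trans (HC k (mm j)) (ler_norm _)).
      apply: (le_trans (Y1 k)).
      apply: (@le_trans _ _ (\sum_(i < k.+1) (1 : R))); last by rewrite sumr_const card_ord.
      apply: ler_sum => i _; case: (_ == _); rewrite ?mul0r // mul1r.
      apply: (le_trans (t1 i)); apply: exprn_ile1 => //; lra.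
    rewrite /g ltnNge kK /= mul0r add0r.
    apply: (@le_trans _ _ (`|z (mm j) k| * \sum_(i < k.+1) (kk i == k)%:R * t i)).
      by apply: ler_wpM2l => //.
    rewrite big_distrr /=.
    apply: (@le_trans _ _ (\sum_(i < k.+1) (kk i == k)%:R * (2^-1 : R) ^+ i)).
      apply: ler_sum => i _; case: eqP => [e|_]; last by rewrite !mul0r mulr0.
      rewrite !mul1r; case: (ltngtP j i) => ji.
      - apply: le_trans (F7 _ _ ji); apply: ler_wpM2r; first exact: ltW.
        exact: (le_trans (HN (mm j) k) (ler_norm _)).
      - by have := proj1 (F4 _ _ ji); rewrite e ltnNge kK.
      - by move: hk; rewrite ji e eqxx.
    apply: (@sum_widen_le _ (fun i => (kk i == k)%:R * (2^-1 : R) ^+ i)) => //.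
  have rest : `|\sum_(k < n | k != Ordinal hN) z (mm j) k * y k| <= B (st j).1 + 2.
    apply: le_trans (ler_norm_sum _ _ _) _.
    apply: (@le_trans _ _ (\sum_(k < n | k != Ordinal hN) g k)).
      apply: ler_sum => k hk; apply: fg => //.
    apply: (@le_trans _ _ (\sum_(k < n) g k)).
      by rewrite [leRHS](bigD1 (Ordinal hN)) //= lerDr g0.
    rewrite big_split /= (@sum_cut R (fun k => `|C k| * k.+1%:R)); last exact: (leq_trans (proj1 (F1 j)) (ltnW hN)).
    rewrite lerD2l.
    apply: (le_trans (dsum R (fun i => (2^-1 : R) ^+ i) kk n _)).
      by move=> i; apply: exprn_ge0.
    exact: geom_half_le2.
  apply: le_trans (lerB_normD _ _); rewrite fk gtr0_norm; last first.
    have Bp : 0 <= B (st j).1 by apply: sumr_ge0 => i _; apply: mulr_ge0.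
    have jp : 0 <= j%:R :> R by [].
    by apply: le_lt_trans bigt; lra.
  rewrite -natr1; lra.
have cf j : cvgn (series (fun k => z (mm j) k * y k)).
  apply: (@abs_dom_cvg R _ y `|N (mm j)|) => // k.
  by rewrite normrM ler_wpM2r // (le_trans (HN (mm j) k) (ler_norm _)).
have [Bd HBd] := @cvg_bnd R _ (Hw _ L1).
pose j := Num.Def.trunc Bd.
have hj : Bd < (j.+1)%:R := truncnS_gt Bd.
have pj : (j.+1)%:R <= `|pairing (z (mm j)) y|.
  rewrite /pairing /rsum -lim_norm; last exact: cf.
  apply: limr_ge; first exact: is_cvg_norm (cf j).
  near=> n; apply: M1; near: n; exact: nbhs_infty_gt.
have := HBd (mm j); lra.
Unshelve. all: by end_near. Qed.

End UB2.



Section Dom.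
Variable R : realType.

Lemma dom_series_cvg (h D : nat -> R) : (forall n, `|h n| <= D n) -> cvgn (series D) ->
  cvgn (series h).
Proof.
move=> hD cD; apply: abs_cvg_series; apply: (series_le_cvg _ _ hD cD) => //.
by move=> n; apply: le_trans (hD n).
Qed.

Lemma tail_bound (h D : nat -> R) N : (forall n, `|h n| <= D n) -> cvgn (series D) ->
  `|rsum h - series h N| <= rsum D - series D N.
Proof.
move=> hD cD; have ch := dom_series_cvg _ _ hD cD.
have D0 n : 0 <= D n by apply: le_trans (hD n).
have H1 : (fun n => `|series h n - series h N|) @ \oo --> `|rsum h - series h N|.
  by apply: cvg_norm; apply: cvgB => //; exact: cvg_cst.
rewrite -(cvg_lim _ H1) //; apply: limr_le; first by apply/cvg_ex; eexists; exact: H1.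
near=> n.
have Nn : (N <= n)%N by near: n; exact: nbhs_infty_ge.
rewrite sub_series_geq //; apply: le_trans (ler_norm_sum _ _ _) _.
apply: (@le_trans _ _ (series D n - series D N)).
  by rewrite sub_series_geq //; apply: ler_sum => k _; exact: hD.
rewrite lerD2r; apply: nondecreasing_cvgn_le => //.
by move=> p q pq; apply: nondecreasing_series => // k _ _; exact: D0.
Unshelve. all: by end_near. Qed.

Lemma dom_cvg (f : nat -> nat -> R) (g D : nat -> R) :
  (forall m n, `|f m n| <= D n) -> (forall n, `|g n| <= D n) ->
  (forall n, f ^~ n @ \oo --> g n) -> cvgn (series D) ->
  (fun m => rsum (f m)) @ \oo --> rsum g.
Proof.
move=> fD gD fg cD; apply/cvgrPdist_lt => e e0.
have e4 : 0 < e / 4 by rewrite divr_gt0.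
have := cD; rewrite -/(cvgn _) => /cvg_ex [l hl].
have hl' := hl; move/cvgrPdist_lt/(_ _ e4): hl => [N _ HN].
have lD : rsum D = l by rewrite /rsum; exact: cvg_lim.
have TN := HN N (leqnn N); rewrite /= -lD in TN.
have fin : (fun m => series (f m) N) @ \oo --> series g N.
  rewrite /series /=; under eq_fun do rewrite big_mkord; rewrite big_mkord.
  exact: cvg_finsum.
move/cvgrPdist_lt/(_ _ e4): fin => fin.
near=> m.
have A := @tail_bound g D N gD cD.
have B := @tail_bound (f m) D N (fD m) cD.
have C : `|series g N - series (f m) N| < e / 4 by near: m.
have T1 : rsum D - series D N <= `|rsum D - series D N| := ler_norm _.
have E : rsum g - rsum (f m) = (rsum g - series g N) + (series g N - series (f m) N)
   - (rsum (f m) - series (f m) N) by ring.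
rewrite E; apply: le_lt_trans (ler_normB _ _) _.
apply: le_lt_trans (lerD (ler_normD _ _) (lexx _)) _.
lra.
Unshelve. all: by end_near. Qed.

End Dom.



Section Spec.
Variable R : realType.
Variables (u : nat -> nat -> rat) (a : nat -> nat).
Hypothesis Ha : admissible_a u a.

Let vv n : nat -> R := fun k => rat_seq (u n) k - unit_vec (a n) k.

Lemma u_zero n k : (a n <= k)%N -> u n k = 0.
Proof.
move=> ak; case: (eqVneq (u n k) 0) => // /(proj1 (proj2 (proj2 Ha)) n k).
by rewrite ltnNge ak.
Qed.

Lemma vv_zero n k : ((a n).+1 <= k)%N -> vv n k = 0.
Proof.
move=> ak; rewrite /vv /rat_seq /unit_vec u_zero ?(ltnW ak) // rmorph0.
by rewrite gtn_eqF // subrr.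
Qed.

Lemma pair_fin (x : nat -> R) n :
  pairing x (vv n) = \sum_(k < (a n).+1) x k * vv n k.
Proof. by rewrite /pairing (@rsum_fin R _ (a n).+1) // => k hk; rewrite vv_zero ?mulr0. Qed.

Lemma vv_l1 n : \sum_(k < (a n).+1) `|vv n k| <= (a n).+1%:R.
Proof.
apply: (@le_trans _ _ (\sum_(k < (a n).+1) (`|rat_seq (u n) k : R| + `|unit_vec (a n) k : R|))).
  by apply: ler_sum => k _; exact: ler_normB.
rewrite big_split /= -natr1; apply: lerD.
  rewrite big_ord_recr /= /rat_seq u_zero // rmorph0 normr0 addr0.
  under eq_bigr do rewrite -ratr_norm.
  rewrite -rmorph_sum -(ratr_nat R) ler_rat; apply: ltW.
  exact: (proj2 (proj2 (proj2 Ha)) n).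
under eq_bigr do rewrite /unit_vec normr_nat eq_sym.
exact: sum_indic.
Qed.

Lemma pair_bnd (x : nat -> R) X n : (forall k, `|x k| <= X) ->
  `|pairing x (vv n)| <= X * (a n).+1%:R.
Proof.
move=> hx; have X0 : 0 <= X by apply: le_trans (hx 0%N).
rewrite pair_fin; apply: le_trans (ler_norm_sum _ _ _) _.
apply: (@le_trans _ _ (X * \sum_(k < (a n).+1) `|vv n k|)); last first.
  by apply: ler_wpM2l => //; exact: vv_l1.
rewrite big_distrr /=; apply: ler_sum => k _; rewrite normrM.
by apply: ler_wpM2r => //.
Qed.

Lemma an_ge n : (n <= a n)%N.
Proof.
elim: n => [//|n IH]; exact: (leq_ltn_trans IH (proj1 Ha n)).
Qed.

Lemma weight_bnd n : (2:R) ^- (a n ^ 2)%N * (a n).+1%:R <= 2 * (2^-1) ^+ n.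
Proof.
have hn := an_ge n.
have key : ((a n).+1 * 2 ^ n <= 2 * 2 ^ (a n ^ 2))%N.
  apply: (@leq_trans ((a n).+1 * 2 ^ a n)); first by rewrite leq_mul2l leq_pexp2l.
  apply: (@leq_trans (2 ^ a n * 2 ^ a n)); first by rewrite leq_mul2r ltn_expl ?orbT.
  rewrite -expnD -expnS leq_pexp2l //; nia.
rewrite exprVn mulrC ler_pdivrMr ?exprn_gt0 // mulrAC ler_pdivlMr ?exprn_gt0 //.
by rewrite -!natrX -!natrM ler_nat.
Qed.

Lemma weights_cvg X : 0 <= X ->
  cvgn (series (fun n => X * ((2:R) ^- (a n ^ 2)%N * (a n).+1%:R))).
Proof.
move=> X0; apply: (@series_le_cvg _ _ (geometric (X * 2) (2^-1))).
- by move=> n; apply: mulr_ge0 => //; apply: mulr_ge0 => //; rewrite invr_ge0 exprn_ge0.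
- by move=> n; rewrite /geometric /=; apply: mulr_ge0; [apply: mulr_ge0|apply: exprn_ge0].
- by move=> n; rewrite /geometric /= -mulrA; apply: ler_wpM2l => //; exact: weight_bnd.
- apply: is_cvg_geometric_series; rewrite gtr0_norm ?invr_gt0 //; lra.
Qed.

End Spec.



Theorem mainTheorem2 (R : realType) (u : nat -> nat -> rat) (a : nat -> nat)
    (z : nat -> nat -> R) (zl : nat -> R) :
  lists_c00_inf_often u ->
  admissible_a u a ->
  (forall m, linf_mem (z m)) ->
  linf_mem zl ->
  weak_star_cvg z zl ->
  (cvgn (fun m => triple_norm u a (z m)) <-> cvgn (fun m => linf_norm (z m))) /\
  ((fun m => triple_norm u a (z m)) @ \oo --> triple_norm u a zl <->
   (fun m => linf_norm (z m)) @ \oo --> linf_norm zl).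
Proof.
move=> _ Ha Hb Hzl Hws.
have Hw : forall y, l1_mem y -> cvgn (fun m => pairing (z m) y).
  by move=> y hy; apply/cvg_ex; eexists; exact: Hws y hy.
have [Cz HCz] := @UB R z Hb Hw.
have [Cl HCl] := Hzl.
pose X := `|Cz| + `|Cl|.
have Xz m k : `|z m k| <= X.
  apply: le_trans (HCz m k) _; apply: le_trans (ler_norm _) _; rewrite lerDl //.
have Xl k : `|zl k| <= X.
  apply: le_trans (HCl k) _; apply: le_trans (ler_norm _) _; rewrite lerDr //.
have X0 : 0 <= X by rewrite addr_ge0.
have hc k : (fun m => z m k) @ \oo --> zl k.
  have e : (fun m => pairing (z m) (unit_vec k)) = (fun m => z m k).
    by apply: funext => m; rewrite pairing_unit.
  rewrite -e -(@pairing_unit R zl k); exact: Hws _ (l1_unit R k).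
pose c n := (2:R) ^- (a n ^ 2)%N.
have c0 n : 0 <= c n by rewrite /c invr_ge0 exprn_ge0.
pose S (x : nat -> R) := rsum (fun n => c n *
   `|pairing x (fun k => rat_seq (u n) k - unit_vec (a n) k)|).
have HS : (fun m => S (z m)) @ \oo --> S zl.
  apply: (@dom_cvg R _ _ (fun n => X * (c n * (a n).+1%:R))).
  - move=> m n; rewrite normrM normr_id ger0_norm // mulrCA.
    by apply: ler_wpM2l => //; exact: (@pair_bnd R u a Ha).
  - move=> n; rewrite normrM normr_id ger0_norm // mulrCA.
    by apply: ler_wpM2l => //; exact: (@pair_bnd R u a Ha).
  - move=> n; under eq_fun do rewrite (@pair_fin R u a Ha).
    rewrite (@pair_fin R u a Ha).
    apply: cvgMl_tmp; apply: cvg_norm.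
    apply: (@cvg_finsum R (fun m k => z m k * (rat_seq (u n) k - unit_vec (a n) k))
      (fun k => zl k * (rat_seq (u n) k - unit_vec (a n) k))) => k.
    by apply: cvgM; [exact: hc | exact: cvg_cst].
  - exact: (@weights_cvg R u a Ha).
have TE x : triple_norm u a x = linf_norm x + S x by [].
split; split => h.
- have -> : (fun m => linf_norm (z m)) = (fun m => triple_norm u a (z m) - S (z m)).
    by apply: funext => m; rewrite TE addrK.
  apply: is_cvgB => //; apply/cvg_ex; eexists; exact: HS.
- under eq_fun do rewrite TE.
  apply: is_cvgD => //; apply/cvg_ex; eexists; exact: HS.
- have -> : (fun m => linf_norm (z m)) = (fun m => triple_norm u a (z m) - S (z m)).
    by apply: funext => m; rewrite TE addrK.
  have -> : linf_norm zl = triple_norm u a zl - S zl by rewrite TE addrK.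
  exact: cvgB.
- under eq_fun do rewrite TE.
  rewrite TE; exact: cvgD.
Qed.
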